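(* Consider the following setting. Fix a target toxicity probability $\phi\in(0,1)$ and constants $\delta_1,\delta_2>0$. Let the target key be $\mathcal I^*=(\phi-\delta_1,\phi+\delta_2)$, and let $\mathcal I_1,\dots,\mathcal I_K$ be the intervals (''keys'') of common width $\delta_1+\delta_2$ obtained by successively adjoining adjacent intervals of this width to both sides of $\mathcal I^*$ as long as they stay within $[0,1]$, ordered from left to right, with $\mathcal I_{k^*}=\mathcal I^*$. At a given dose level $j$ with toxicity probability $p_j$, $n_j$ patients have been treated. For each patient $i$, $\delta_i\in\{0,1\}$ indicates whether the binary toxicity outcome $x_i$ has been ascertained, and each patient with $\delta_i=0$ (pending) has not experienced toxicity so far and carries a weight $w_i\in[0,1]$. Let $\tilde y_j=\sum_i\delta_ix_i$ (number of observed toxicities), $m_j=\sum_i\delta_i(1-x_i)$, and $\tilde m_j=m_j+\sum_i(1-\delta_i)w_i$. For nonnegative numbers $(y,m)$, define the decision $a(y,m)\in\{-1,0,1\}$ as follows: with $p_j$ having posterior distribution $\mathrm{Beta}(y+1,m+1)$ (i.e. uniform prior and binomial-type likelihood $p_j^{y}(1-p_j)^{m}$), let $k_s=\arg\max_{k=1,\dots,K}\Pr(p_j\in\mathcal I_k)$; set $a=1$ (escalate) if $k_s<k^*$, $a=0$ (stay) if $k_s=k^*$, and $a=-1$ (de-escalate) if $k_s>k^*$. The TITE-keyboard decision based on the observed interim data is $a(D_j^o)=a(\tilde y_j,\tilde m_j)$, and the decision based on the ''cross-sectional'' data $D_j^s=(n_j,\tilde y_j)$, which treats every pending patient as a non-toxicity,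 is $a(D_j^s)=a(\tilde y_j,n_j-\tilde y_j)$. Then the TITE-keyboard design is monotonic: $a(D_j^o)\le a(D_j^s)$ for every dose level $j$.
   Context: The weight $w_i$ represents $\Pr(t_i\le u_i\mid x_i=1)$, where $t_i$ is the time to toxicity and $u_i$ the patient's follow-up time so far, so $w_i\in[0,1]$. A dose-finding design is called monotonic if $a(D_j^o)\le a(D_j^s)$ for all $j$, where $a(\cdot)=-1,0,1$ denote de-escalation, staying at the current dose, and escalation. *)

(* Defs.v *)
From HB Require Import structures.
From mathcomp Require Import all_boot all_order all_algebra.
From mathcomp Require Import all_classical all_reals all_analysis.
Set Implicit Arguments. Unset Strict Implicit. Unset Printing Implicit Defensive.
Import Order.TTheory GRing.Theory Num.Theory.
Import numFieldNormedType.Exports.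
Local Open Scope classical_set_scope.
Local Open Scope ring_scope.

Section Keyboard.
Variable R : realType.

Definition beta_kernel (y m : R) (p : R) : R :=
  if (0 <= p) && (p <= 1) then p `^ y * (1 - p) `^ m else 0.

Definition beta_prob (y m a b : R) : R :=
  (\int[lebesgue_measure]_(p in `]a, b[) beta_kernel y m p) /
  (\int[lebesgue_measure]_(p in `[0, 1]) beta_kernel y m p).

(* Keys: common width w = d1 + d2.  Number of keys adjoined to the left of
   I* = ]phi - d1, phi + d2[ (staying inside [0,1]) and to the right. *)
Definition key_width (d1 d2 : R) : R := d1 + d2.
Definition nleft (phi d1 d2 : R) : nat := Num.truncn ((phi - d1) / key_width d1 d2).
Definition nright (phi d1 d2 : R) : nat :=
  Num.truncn ((1 - (phi + d2)) / key_width d1 d2).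

(* Keys are indexed 1..K from left to right; the target key has index kstar. *)
Definition kstar (phi d1 d2 : R) : nat := (nleft phi d1 d2).+1.
Definition nkeys (phi d1 d2 : R) : nat := (nleft phi d1 d2 + 1 + nright phi d1 d2)%N.

Definition key_lo (phi d1 d2 : R) (k : nat) : R :=
  phi - d1 + ((k%:Z - (kstar phi d1 d2)%:Z)%:~R) * key_width d1 d2.
Definition key_hi (phi d1 d2 : R) (k : nat) : R :=
  key_lo phi d1 d2 k + key_width d1 d2.

Definition key_prob (phi d1 d2 y m : R) (k : nat) : R :=
  beta_prob y m (key_lo phi d1 d2 k) (key_hi phi d1 d2 k).

(* k_s = argmax_k Pr(p in I_k); ties broken towards the smallest index. *)
Definition keys_seq (phi d1 d2 : R) : seq nat := iota 1 (nkeys phi d1 d2).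
Definition kmax (phi d1 d2 y m : R) : nat :=
  (find (fun k => all (fun k' => key_prob phi d1 d2 y m k' <= key_prob phi d1 d2 y m k)
                      (keys_seq phi d1 d2))
        (keys_seq phi d1 d2)).+1.

Definition decision (phi d1 d2 y m : R) : int :=
  let ks := kmax phi d1 d2 y m in
  if (ks < kstar phi d1 d2)%N then 1%Z
  else if ks == kstar phi d1 d2 then 0%Z else (-1)%Z.

End Keyboard.

(* Main.v *)
Require Import Defs.
From HB Require Import structures.
From mathcomp Require Import all_boot all_order all_algebra.
From mathcomp Require Import all_classical all_reals all_analysis.
From mathcomp Require Import lra zify.
Import Order.TTheory GRing.Theory Num.Theory.
Local Open Scope ring_scope.

Section S.
Local Open Scope classical_set_scope.
Variable R : realType.

Lemma kernel_ge0 (y m p : R) : 0 <= beta_kernel y m p.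
Proof. rewrite /beta_kernel; case: ifP => // _; exact: mulr_ge0 (powR_ge0 _ _) (powR_ge0 _ _). Qed.

Lemma powR_le1 (a e : R) : 0 <= a <= 1 -> 0 <= e -> a `^ e <= 1.
Proof.
move=> /andP[a0 a1] e0.
have h := @ge0_ler_powR R e e0 a 1.
have -> : (1:R) = 1 `^ e by rewrite powR1.
by apply: h; rewrite ?inE //= ?nnegrE.
Qed.

Lemma kernel_le1 (y m p : R) : 0 <= y -> 0 <= m -> beta_kernel y m p <= 1.
Proof.
move=> y0 m0; rewrite /beta_kernel; case: ifP => // /andP[p0 p1].
rewrite -[1](mulr1 1); apply: ler_pM; rewrite ?powR_ge0 //; apply: powR_le1 => //.
  by rewrite p0 p1.
by apply/andP; split; lra.
Qed.

Lemma kernel_meas (y m : R) : measurable_fun setT (beta_kernel y m).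
Proof.
rewrite /beta_kernel.
apply: measurable_fun_ifT.
- apply: measurable_and; apply: measurable_realfun.measurable_fun_ler => //; exact: measurable_cst.
- apply: measurable_realfun.measurable_funM; first exact: measurable_realfun.measurable_powR.
  apply: (measurableT_comp (measurable_realfun.measurable_powR _)).
  by apply: measurable_realfun.measurable_funB => //; exact: measurable_cst.
- exact: measurable_cst.
Qed.

Lemma kernel_int (y m : R) (i : interval R) : 0 <= y -> 0 <= m ->
  (lebesgue_measure [set` i] < +oo)%E ->
  lebesgue_measure.-integrable [set` i] (EFin \o beta_kernel y m).
Proof.
move=> y0 m0 fin.
apply: measurable_bounded_integrable => //.
- exact: measurable_funS (kernel_meas y m).
- exists 1; split => // M hM x _ /=.
  rewrite ger0_norm ?kernel_ge0 //.
  by apply: le_trans (kernel_le1 _ _ _ y0 m0) (ltW hM).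
Qed.


Lemma powR_exp_anti (a e e' : R) : 0 <= a <= 1 -> 0 <= e <= e' -> a `^ e' <= a `^ e.
Proof.
move=> /andP[a0 a1] /andP[e0 ee'].
have [->|anz] := eqVneq a 0.
  have [e'0|e'nz] := eqVneq e' 0.
    have -> : e = 0 by apply/eqP; rewrite eq_le; apply/andP; split; lra.
    by rewrite e'0.
  by rewrite powR0 // powR_ge0.
apply: ger_powR => //; rewrite a1 andbT lt_neqAle eq_sym anz a0 //.
Qed.

Lemma kern_anti (y m m' p : R) : 0 <= m <= m' ->
  beta_kernel y m' p <= beta_kernel y m p.
Proof.
move=> hm; rewrite /beta_kernel; case: ifP => // /andP[p0 p1].
apply: ler_wpM2l; first exact: powR_ge0.
apply: powR_exp_anti => //; apply/andP; split; lra.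
Qed.

Lemma kern_mul (y m e p : R) : p < 1 -> 0 <= e -> 0 <= m ->
  beta_kernel y (m + e) p = beta_kernel y m p * (1 - p) `^ e.
Proof.
move=> p1 e0 m0; rewrite /beta_kernel; case: ifP => [/andP[p0 _]|]; last by rewrite mul0r.
rewrite -mulrA powRD //; apply/implyP => _; lra.
Qed.

Lemma kern_up (y m e lo p : R) : 0 <= m -> 0 <= e -> lo < 1 -> lo < p ->
  beta_kernel y (m + e) p <= (1 - lo) `^ e * beta_kernel y m p.
Proof.
move=> m0 e0 lo1 lop.
have [->|enz] := eqVneq e 0; first by rewrite addr0 powRr0 mul1r.
have [p1|p1] := ltP p 1.
  rewrite kern_mul // mulrC; apply: ler_wpM2r; first exact: kernel_ge0.
  apply: ge0_ler_powR => //; rewrite ?nnegrE; lra.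
rewrite /beta_kernel; case: ifP => [/andP[p0 p1']|_]; last by rewrite mulr0.
have -> : p = 1 by lra.
rewrite subrr powR0 ?mulr0; last by apply/eqP; lra.
by apply: mulr_ge0; [exact: powR_ge0| apply: mulr_ge0; exact: powR_ge0].
Qed.

Lemma kern_down (y m e lo p : R) : 0 <= m -> 0 <= e -> lo < 1 -> p < lo ->
  (1 - lo) `^ e * beta_kernel y m p <= beta_kernel y (m + e) p.
Proof.
move=> m0 e0 lo1 plo.
rewrite kern_mul //; last lra.
rewrite mulrC; apply: ler_wpM2l; first exact: kernel_ge0.
apply: ge0_ler_powR => //; rewrite ?nnegrE; lra.
Qed.


Lemma itv_fin (a b : R) : (lebesgue_measure (`]a, b[ : set R) < +oo)%E.
Proof. by rewrite lebesgue_measure_itv /=; case: ifP => _; rewrite ?ltry. Qed.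

Lemma itv_fin01 : (lebesgue_measure (`[0%R, 1%R] : set R) < +oo)%E.
Proof. by rewrite lebesgue_measure_itv /=; case: ifP => _; rewrite ?ltry. Qed.

Lemma int_up (y m e lo hi : R) : 0 <= y -> 0 <= m -> 0 <= e -> lo < 1 ->
  \int[lebesgue_measure]_(p in `]lo, hi[) beta_kernel y (m + e) p <=
  (1 - lo) `^ e * \int[lebesgue_measure]_(p in `]lo, hi[) beta_kernel y m p.
Proof.
move=> y0 m0 e0 lo1.
rewrite -RintegralZl //; last exact: kernel_int _ _ (itv_fin _ _).
apply: le_Rintegral => //.
- apply: kernel_int => //; [lra | exact: itv_fin].
- have mD : measurable (`]lo, hi[%classic : set (measurableTypeR R)) by [].
  have := integrableZl mD ((1 - lo) `^ e) (kernel_int y m `]lo, hi[%R y0 m0 (itv_fin _ _)).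
  exact.
- move=> p; rewrite /= in_itv /= => /andP[lop _]; exact: kern_up.
Qed.

Lemma int_down (y m e lo0 hi0 lo : R) : 0 <= y -> 0 <= m -> 0 <= e -> lo < 1 -> hi0 <= lo ->
  (1 - lo) `^ e * \int[lebesgue_measure]_(p in `]lo0, hi0[) beta_kernel y m p <=
  \int[lebesgue_measure]_(p in `]lo0, hi0[) beta_kernel y (m + e) p.
Proof.
move=> y0 m0 e0 lo1 hilo.
rewrite -RintegralZl //; last exact: kernel_int _ _ (itv_fin _ _).
apply: le_Rintegral => //.
- have mD : measurable (`]lo0, hi0[%classic : set (measurableTypeR R)) by [].
  have := integrableZl mD ((1 - lo) `^ e) (kernel_int y m `]lo0, hi0[%R y0 m0 (itv_fin _ _)).
  exact.
- apply: kernel_int => //; [lra | exact: itv_fin].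
- move=> p; rewrite /= in_itv /= => /andP[_ phi]; apply: kern_down => //; lra.
Qed.

Lemma int_zero (y m lo hi : R) : 1 <= lo ->
  \int[lebesgue_measure]_(p in `]lo, hi[) beta_kernel y m p = 0.
Proof.
move=> lo1.
rewrite (@eq_Rintegral _ _ _ _ _ (fun _ => 0)); last first.
  move=> p; rewrite inE /= in_itv /= => /andP[lop _].
  rewrite /beta_kernel; case: ifP => // /andP[_ p1]; lra.
by rewrite Rintegral_cst ?mul0r.
Qed.

Lemma int01_anti (y m m' : R) : 0 <= y -> 0 <= m <= m' ->
  \int[lebesgue_measure]_(p in `[0, 1]) beta_kernel y m' p <=
  \int[lebesgue_measure]_(p in `[0, 1]) beta_kernel y m p.
Proof.
move=> y0 hm.
apply: le_Rintegral => //.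
- apply: kernel_int => //; [lra | exact: itv_fin01].
- apply: kernel_int => //; [lra | exact: itv_fin01].
- move=> p _; exact: kern_anti.
Qed.


Lemma key_step (y m e lo0 hi0 lo hi : R) : 0 <= y -> 0 <= m -> 0 <= e -> hi0 <= lo ->
  \int[lebesgue_measure]_(p in `]lo, hi[) beta_kernel y m p <=
  \int[lebesgue_measure]_(p in `]lo0, hi0[) beta_kernel y m p ->
  \int[lebesgue_measure]_(p in `]lo, hi[) beta_kernel y (m + e) p <=
  \int[lebesgue_measure]_(p in `]lo0, hi0[) beta_kernel y (m + e) p.
Proof.
move=> y0 m0 e0 hilo hF.
have [lo1|lo1] := ltP lo 1.
  apply: le_trans (int_up y m e lo hi y0 m0 e0 lo1) _.
  apply: le_trans (int_down y m e lo0 hi0 lo y0 m0 e0 lo1 hilo).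
  by apply: ler_wpM2l => //; exact: powR_ge0.
rewrite int_zero //; apply: Rintegral_ge0 => p _; exact: kernel_ge0.
Qed.

Lemma argmax_ex (g : nat -> R) (t : seq nat) : t != [::] ->
  exists2 k, k \in t & forall k', k' \in t -> g k' <= g k.
Proof.
elim: t => // a t IH _.
case: t IH => [|b t] IH.
  by exists a => [|k']; rewrite ?mem_seq1 ?inE // => /eqP ->.
have [k kin hk] := IH isT.
have [gak|gka] := leP (g a) (g k).
  exists k; first by rewrite inE kin orbT.
  by move=> k'; rewrite inE => /orP[/eqP ->|/hk].
exists a; first by rewrite inE eqxx.
move=> k'; rewrite inE => /orP[/eqP ->//|/hk h]; exact: le_trans h (ltW gka).
Qed.


Definition Fi (y mm a b : R) := \int[lebesgue_measure]_(p in `]a, b[) beta_kernel y mm p.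
Definition Zi (y mm : R) := \int[lebesgue_measure]_(p in `[0, 1]) beta_kernel y mm p.

Lemma Zi_ge0 y mm : 0 <= Zi y mm.
Proof. rewrite /Zi; apply: Rintegral_ge0 => p _; exact: kernel_ge0. Qed.

Lemma Zi_anti y m m' : 0 <= y -> 0 <= m <= m' -> Zi y m' <= Zi y m.
Proof. rewrite /Zi; exact: int01_anti. Qed.

Lemma Fi_step (y m e lo0 hi0 lo hi : R) : 0 <= y -> 0 <= m -> 0 <= e -> hi0 <= lo ->
  Fi y m lo hi <= Fi y m lo0 hi0 -> Fi y (m + e) lo hi <= Fi y (m + e) lo0 hi0.
Proof. rewrite /Fi; exact: key_step. Qed.

Lemma aux_pos (a b z : R) : 0 <= z -> a / z < b / z -> 0 < z.
Proof.
move=> z0 h; rewrite lt_def z0 andbT; apply/negP => /eqP z0'.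
by move: h; rewrite z0' invr0 !mulr0 ltxx.
Qed.

Lemma aux_le (a b z : R) : 0 < z -> a / z <= b / z -> a <= b.
Proof. by move=> z0; rewrite ler_pM2r // invr_gt0. Qed.

Lemma aux_final (a b z : R) : 0 < z -> a / z < b / z -> b <= a -> False.
Proof. by move=> z0; rewrite ltr_pM2r ?invr_gt0 // => h1 h2; move: (lt_le_trans h1 h2); rewrite ltxx. Qed.

Lemma int_step (a b c : nat) : (a < b)%N ->
  ((((1 + a)%N)%:Z - c%:Z)%:~R : R) + 1 <= (((1 + b)%N)%:Z - c%:Z)%:~R.
Proof.
move=> h.
have := ler_int R (((1 + a)%N)%:Z - c%:Z + 1) (((1 + b)%N)%:Z - c%:Z).
rewrite intrD mulr1z => ->; lia.
Qed.

Lemma key_geo (phi d1 d2 : R) (a b : nat) : 0 < d1 + d2 -> (a < b)%N ->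
  key_hi phi d1 d2 (1 + a) <= key_lo phi d1 d2 (1 + b).
Proof.
move=> w0 h; have := int_step a b (kstar phi d1 d2) h.
rewrite /key_hi /key_lo /key_width.
move: (((((1 + a)%N)%:Z - (kstar phi d1 d2)%:Z)%:~R : R)) => A.
move: (((((1 + b)%N)%:Z - (kstar phi d1 d2)%:Z)%:~R : R)) => B hAB.
have hp : 0 <= (B - (A + 1)) * (d1 + d2) by apply: mulr_ge0; lra.
lra.
Qed.

Lemma kmax_anti (phi d1 d2 y m e : R) : 0 <= y -> 0 <= m -> 0 <= e -> 0 < d1 + d2 ->
  (kmax phi d1 d2 y (m + e) <= kmax phi d1 d2 y m)%N.
Proof.
move=> y0 m0 e0 w0.
have hmm : 0 <= m <= m + e by apply/andP; split; lra.
rewrite /kmax ltnS.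
set s := keys_seq phi d1 d2.
set g := key_prob phi d1 d2 y.
have sne : s != [::] by rewrite /s /keys_seq /nkeys addn1 addSn.
have hasP : forall mm, has (fun k => all (fun k' => g mm k' <= g mm k) s) s.
  move=> mm; have [k kin hk] := @argmax_ex (g mm) s sne.
  by apply/hasP; exists k => //; apply/allP => k' /hk.
have [big|small] := leqP (size s) (find (fun k => all (fun k' => g m k' <= g m k) s) s).
  exact: leq_trans (find_size _ _) big.
set i0 := find _ s in small *.
rewrite leqNgt; apply/negP => hi.
have Pk0 := nth_find 0%N (hasP m); rewrite -/i0 in Pk0.
have nPk0 := before_find 0%N hi.
set i := find _ s in hi nPk0.
have ilt : (i < size s)%N by rewrite /i -has_find.
have Pk := nth_find 0%N (hasP (m + e)); rewrite -/i in Pk.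
have sz : size s = nkeys phi d1 d2 by rewrite size_iota.
rewrite /s /keys_seq in Pk0 nPk0 Pk.
rewrite nth_iota in Pk0; last by rewrite -sz.
rewrite nth_iota in nPk0; last by rewrite -sz.
rewrite nth_iota in Pk; last by rewrite -sz.
move/negbT/allPn: nPk0 => [k'' k''s hk''].
have h1 := allP Pk k'' k''s.
have kin : (1 + i)%N \in iota 1 (nkeys phi d1 d2) by rewrite mem_iota; lia.
have h2 := allP Pk0 _ kin.
rewrite -ltNge in hk''.
have hlt := lt_le_trans hk'' h1.
have {hlt}hlt : Fi y (m + e) (key_lo phi d1 d2 (1 + i0)) (key_hi phi d1 d2 (1 + i0)) / Zi y (m + e) <
  Fi y (m + e) (key_lo phi d1 d2 (1 + i)) (key_hi phi d1 d2 (1 + i)) / Zi y (m + e) := hlt.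
have {h2}h2 : Fi y m (key_lo phi d1 d2 (1 + i)) (key_hi phi d1 d2 (1 + i)) / Zi y m <=
  Fi y m (key_lo phi d1 d2 (1 + i0)) (key_hi phi d1 d2 (1 + i0)) / Zi y m := h2.
have Z'0 := Zi_ge0 y (m + e).
have Z'pos : 0 < Zi y (m + e) := aux_pos _ _ _ Z'0 hlt.
have ZZ : Zi y (m + e) <= Zi y m := Zi_anti y m (m + e) y0 hmm.
have Zpos : 0 < Zi y m by exact: lt_le_trans Z'pos ZZ.
have hF : Fi y m (key_lo phi d1 d2 (1 + i)) (key_hi phi d1 d2 (1 + i)) <=
          Fi y m (key_lo phi d1 d2 (1 + i0)) (key_hi phi d1 d2 (1 + i0)).
  exact: aux_le _ _ _ Zpos h2.
have geo := key_geo phi d1 d2 i0 i w0 hi.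
have hF' := Fi_step _ _ _ _ _ _ _ y0 m0 e0 geo hF.
exact: aux_final _ _ _ Z'pos hlt hF'.
Qed.

Lemma decision_mono (phi d1 d2 y m e : R) : 0 <= y -> 0 <= m -> 0 <= e -> 0 < d1 + d2 ->
  decision phi d1 d2 y m <= decision phi d1 d2 y (m + e).
Proof.
move=> y0 m0 e0 w0; have := kmax_anti phi d1 d2 y m e y0 m0 e0 w0.
rewrite /decision.
move: (kmax phi d1 d2 y (m + e)) (kmax phi d1 d2 y m) (kstar phi d1 d2) => a b k hab.
have [h1|h1] := ltnP a k; have [h2|h2] := ltnP b k; rewrite /=;
  have [h3|h3] := eqVneq a k; have [h4|h4] := eqVneq b k; rewrite //=; lia.
Qed.

End S.

Theorem theorem2 (R : realType) (phi d1 d2 : R)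
  (hphi : 0 < phi < 1) (hd1 : 0 < d1) (hd2 : 0 < d2)
  (n : nat) (delta x : 'I_n -> bool) (w : 'I_n -> R)
  (hw : forall i, ~~ delta i -> 0 <= w i <= 1) :
  let ytil : R := \sum_(i < n) ((delta i && x i) : nat)%:R in
  let m : R := \sum_(i < n) ((delta i && ~~ x i) : nat)%:R in
  let mtil : R := m + \sum_(i < n | ~~ delta i) w i in
  (decision phi d1 d2 ytil mtil <= decision phi d1 d2 ytil (n%:R - ytil))%R.
Proof.
cbv zeta.
set ytil : R := \sum_(i < n) ((delta i && x i) : nat)%:R.
set m : R := \sum_(i < n) ((delta i && ~~ x i) : nat)%:R.
set mtil : R := m + \sum_(i < n | ~~ delta i) w i.
have y0 : 0 <= ytil by apply: sumr_ge0.
have m0 : 0 <= m by apply: sumr_ge0.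
have mt0 : 0 <= mtil.
  apply: addr_ge0 => //; apply: sumr_ge0 => i /hw /andP[] //.
have w0 : 0 < d1 + d2 by lra.
have eE : n%:R - ytil - mtil = \sum_(i < n) (1 - ((delta i && x i) : nat)%:R
    - ((delta i && ~~ x i) : nat)%:R - (if ~~ delta i then w i else 0)).
  rewrite /mtil /m /ytil big_mkcond /= !sumrB sumr_const card_ord.
  rewrite -big_mkcond /=; lra.
have e0 : 0 <= n%:R - ytil - mtil.
  rewrite eE; apply: sumr_ge0 => i _.
  case hd: (delta i); case: (x i) => /=; rewrite ?subr0 ?subrr //=; try lra;
  have := hw i; rewrite hd => /(_ isT) /andP[_ h]; lra.
have := @decision_mono R phi d1 d2 ytil mtil (n%:R - ytil - mtil) y0 mt0 e0 w0.
have -> : mtil + (n%:R - ytil - mtil) = n%:R - ytil by lra.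
exact.
Qed.
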